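(* Consider any single round of Algorithm 2 on a connected graph $G$ with nonnegative integer loads, and let $L_{max},L_{min}$ be the maximum and minimum loads at the beginning of the round. Then: (1) if node $u$ transferred load to node $v$ in this round, then at the end of the round $load(v)\le load(u)$; (2) every node whose load strictly decreases in the round ends with load strictly greater than $L_{min}$, and every node whose load strictly increases ends with load strictly less than $L_{max}$; consequently Algorithm 2 is monotonic.
   Context: $G=(V,E)$ is an undirected connected graph; each node $u$ holds an integer load $load(u)\ge 0$. Algorithm 2 (single proposal, discrete) proceeds in synchronous rounds; in each round, using the loads at the start of the round: (1) every node $u$ having at least one neighbor $v$ with $load(v)\le load(u)-2$ picks the first neighbor $v$ (in a fixed order of its neighbors) maximizing $load(u)-load(v)$ and sends $v$ a proposal of value $p_{uv}=\lfloor (load(u)-load(v))/2\rfloor$; (2) every node that received at least one proposal accepts exactly one proposal of maximum value; (3) all accepted transfers are executed simultaneously (each accepted proposal $p_{wu}$ moves $p_{wu}$ from $w$ to $u$), and nodes report their new loads to neighbors. An algorithm is monotonic if in every execution (a) each load transfer goes from a higher-loaded node to a less-loaded one, and (b) the maximum load never increases and the minimum load never decreases. *)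

(* Defs.v *)
From mathcomp Require Import all_boot all_order.
Set Implicit Arguments. Unset Strict Implicit. Unset Printing Implicit Defensive.

Section Alg2.
Variable V : finType.
(* nb u : the neighbours of u, listed in the fixed order used by u *)
Variable nb : V -> seq V.

Definition good_graph (adj : rel V) :=
  [/\ irreflexive adj, symmetric adj,
      (forall x y, connect adj x y) &
      (forall u, uniq (nb u) /\ forall v, (v \in nb u) = adj u v)].

Variable load : V -> nat.

Definition proposes (u : V) : bool := has (fun v => load v + 2 <= load u) (nb u).

Definition maxdiff (u : V) : nat := \max_(v <- nb u) (load u - load v).

Definition target (u : V) : V :=
  nth u (nb u) (find (fun v => load u - load v == maxdiff u) (nb u)).

Definition pval (u : V) : nat := (load u - load (target u)) %/ 2.

Definition proposes_to (w v : V) : bool := proposes w && (target w == v).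

(* acc v = Some w : v accepts w's proposal; a valid acceptance choice accepts
   exactly one proposal of maximum value whenever v received a proposal *)
Definition valid_acc (acc : V -> option V) : Prop :=
  forall v, match acc v with
            | Some w => proposes_to w v /\ forall w', proposes_to w' v -> pval w' <= pval w
            | None => forall w, ~~ proposes_to w v
            end.

Definition sent (acc : V -> option V) (u : V) : bool :=
  proposes u && (acc (target u) == Some u).

Definition new_load (acc : V -> option V) (x : V) : nat :=
  load x - (if sent acc x then pval x else 0)
  + (if acc x is Some w then pval w else 0).

End Alg2.

Definition Lmax (V : finType) (load : V -> nat) : nat := \max_(x : V) load x.
Definition Lmin (V : finType) (load : V -> nat) : nat :=
  \big[minn/Lmax load]_(x : V) load x.

(* An execution of Algorithm 2: ex n = loads at the start of round n,
   accs n = the (valid) acceptance choices of round n. *)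
Definition execution (V : finType) (nb : V -> seq V)
  (ex : nat -> V -> nat) (accs : nat -> V -> option V) : Prop :=
  forall n, valid_acc nb (ex n) (accs n) /\ ex n.+1 = new_load nb (ex n) (accs n).

Definition alg2_monotonic (V : finType) (nb : V -> seq V) : Prop :=
  forall ex accs, execution nb ex accs ->
    forall n,
      (forall u, sent nb (ex n) (accs n) u ->
                 ex n (target nb (ex n) u) < ex n u) /\
      Lmax (ex n.+1) <= Lmax (ex n) /\ Lmin (ex n) <= Lmin (ex n.+1).

(* Main.v *)
Require Import Defs.
From mathcomp Require Import all_boot all_order.
From mathcomp Require Import zify.

Lemma max_attained (T : eqType) (s : seq T) (F : T -> nat) :
  0 < \max_(v <- s) F v -> has (fun v => F v == \max_(v <- s) F v) s.
Proof.
elim: s => [|a s IH]; first by rewrite big_nil.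
rewrite big_cons /= => H.
set m := \max_(v <- s) F v in IH H *.
have [h|h] := leqP m (F a).
  by rewrite eqxx.
rewrite IH ?orbT //; lia.
Qed.

Lemma max_ge (T : eqType) (s : seq T) (F : T -> nat) x :
  x \in s -> F x <= \max_(v <- s) F v.
Proof.
elim: s => [|a s IH] //; rewrite inE big_cons => /orP [/eqP -> | /IH h].
  exact: leq_maxl.
by apply: leq_trans h (leq_maxr _ _).
Qed.

Lemma target_gap (V : finType) (nb : V -> seq V) load u :
  proposes nb load u -> load (target nb load u) + 2 <= load u.
Proof.
move=> /hasP [v vin hv].
have hm : load u - load v <= maxdiff nb load u by apply: max_ge vin.
have hpos : 0 < maxdiff nb load u by lia.
have := nth_find u (@max_attained _ (nb u) (fun v => load u - load v) hpos).
rewrite -/(maxdiff nb load u) -/(target nb load u) => /eqP; lia.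
Qed.

Lemma bigmin_le (T : eqType) (s : seq T) (F : T -> nat) m y :
  y \in s -> \big[minn/m]_(x <- s) F x <= F y.
Proof.
elim: s => [|a s IH] //; rewrite inE big_cons => /orP [/eqP -> | /IH h].
  exact: geq_minl.
by apply: leq_trans h; exact: geq_minr.
Qed.

Lemma Lmin_le (V : finType) (load : V -> nat) y : Lmin load <= load y.
Proof. by rewrite /Lmin; apply: bigmin_le; rewrite mem_index_enum. Qed.

Arguments target_gap {V nb load u}.

Section Core.
Variables (V : finType) (nb : V -> seq V) (load : V -> nat) (acc : V -> option V).
Hypothesis hacc : valid_acc nb load acc.

Lemma acc_target v w : acc v = Some w -> proposes nb load w /\ target nb load w = v.
Proof.
move=> e; have := hacc v; rewrite e => -[/andP [p /eqP t] _]; by [].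
Qed.

Lemma part1 u v : sent nb load acc u -> target nb load u = v ->
     new_load nb load acc v <= new_load nb load acc u.
Proof.
move=> hs ht; have hs' := hs; move: hs' => /andP [hp /eqP ha].
rewrite ht in ha.
have g := target_gap hp; rewrite ht in g.
rewrite /new_load ha hs.
have -> : pval nb load u = (load u - load v) %/ 2 by rewrite /pval ht.
case: (sent _ _ _ v); case: (acc u) => [w|]; lia.
Qed.

Lemma part2 x : new_load nb load acc x < load x -> Lmin load < new_load nb load acc x.
Proof.
rewrite /new_load; case hs: (sent nb load acc x); last by lia.
move: hs => /andP [hp _]; have g := target_gap hp.
have hmin : Lmin load <= load (target nb load x).
  exact: Lmin_le.
rewrite /pval; case: (acc x) => [w|]; lia.
Qed.

Lemma part3 x : load x < new_load nb load acc x -> new_load nb load acc x < Lmax load.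
Proof.
rewrite /new_load; case e: (acc x) => [w|]; last by lia.
have [hp ht] := @acc_target x w e; have g := target_gap hp; rewrite ht in g.
have hmax : load w <= Lmax load by rewrite /Lmax (bigD1 w) //=; exact: leq_maxl.
rewrite /pval ht; case: (sent _ _ _ x); lia.
Qed.

Lemma minmax :
  Lmax (new_load nb load acc) <= Lmax load /\ Lmin load <= Lmin (new_load nb load acc).
Proof.
split.
  rewrite /Lmax; apply/bigmax_leqP => x _.
  case: (leqP (new_load nb load acc x) (load x)) => h.
    by apply: leq_trans h _; rewrite (bigD1 x) //=; exact: leq_maxl.
  by apply: ltnW; rewrite -/(Lmax load); apply: part3.
have hx : forall x, Lmin load <= new_load nb load acc x.
  move=> x; case: (leqP (load x) (new_load nb load acc x)) => h.
    exact: leq_trans (@Lmin_le _ load x) h.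
  exact: ltnW (@part2 x h).
rewrite {2}/Lmin; apply: (big_ind (fun y => Lmin load <= y)) => //.
- case: (pickP (@predT V)) => [x0 _ | h].
    apply: leq_trans (hx x0) _; rewrite /Lmax (bigD1 x0) //=; exact: leq_maxl.
  by rewrite /Lmin big_pred0 // /Lmax big_pred0.
- by move=> a b ha hb; rewrite leq_min ha hb.
Qed.
End Core.

Theorem lemma6 (V : finType) (adj : rel V) (nb : V -> seq V)
  (hG : good_graph nb adj) (load : V -> nat) (acc : V -> option V)
  (hacc : valid_acc nb load acc) :
  (forall u v, sent nb load acc u -> target nb load u = v ->
     new_load nb load acc v <= new_load nb load acc u) /\
  (forall x, new_load nb load acc x < load x -> Lmin load < new_load nb load acc x) /\
  (forall x, load x < new_load nb load acc x -> new_load nb load acc x < Lmax load) /\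
  alg2_monotonic nb.
Proof.
split; first by move=> u v; apply: part1.
split; first by move=> x; apply: part2.
split; first by move=> x; apply: part3.
move=> ex accs hex n; have [hv ->] := hex n.
split; last by apply: minmax.
move=> u /andP [hp _]; have := target_gap hp; lia.
Qed.
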